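(* Let $\lambda$ be a partition of $n$. The number of connected components of the graph $\mathcal A_\lambda$ is at most $d_\lambda$.
   Context: Fix $n\ge1$; $\overline i=i+n\mathbb Z$, $[\overline n]=\{\overline1,\dots,\overline n\}$. A tabloid of shape $\lambda$ is a sequence $(T_1,\dots,T_{\ell(\lambda)})$ of pairwise disjoint subsets of $[\overline n]$ with $|T_r|=\lambda_r$ and union $[\overline n]$ (row 1 highest). $\tau(T)=\{\overline i:\overline i\text{ lies in a strictly higher row than }\overline{i+1}\}$. $T,T'$ are connected by a Knuth move if $T'$ is obtained from $T$ by exchanging $\overline i$ and $\overline{i+1}$ for some $i$ and neither of $\tau(T),\tau(T')$ contains the other. $\mathcal A_\lambda$ is the graph on tabloids of shape $\lambda$ whose edges are Knuth moves. $d_\lambda=\gcd(\lambda'_1,\lambda'_2,\dots)$ with $\lambda'$ the conjugate partition. *)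

(* Defs.v *)
From mathcomp Require Import all_boot.
Set Implicit Arguments. Unset Strict Implicit. Unset Printing Implicit Defensive.

Definition is_partition (n : nat) (la : seq nat) : bool :=
  [&& sorted geq la, all (fun x => 0 < x) la & sumn la == n].

(* Conjugate partition: conj_part la j = lambda'_(j+1) = #{r | lambda_r > j}. *)
Definition conj_part (la : seq nat) (j : nat) : nat := count (fun x => j < x) la.

Definition d_lambda (la : seq nat) : nat :=
  foldr gcdn 0 [seq conj_part la j | j <- iota 0 (head 0 la)].

(* The residues [n-bar] are 'I_n; i+1 mod n is ordS i.  A tabloid of shape la
   (T_1,...,T_l) is encoded by its row function: T x = r  iff  x in T_(r+1)
   (rows indexed 0..l-1, row 0 highest), with |T_(r+1)| = lambda_(r+1). *)
Definition is_tabloid (n : nat) (la : seq nat) (T : {ffun 'I_n -> 'I_(size la)}) : bool :=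
  [forall r : 'I_(size la), #|[set x | T x == r]| == nth 0 la r].

Definition tabloid (n : nat) (la : seq nat) :=
  {T : {ffun 'I_n -> 'I_(size la)} | @is_tabloid n la T}.

(* tau(T) = { i | i lies in a strictly higher row than i+1 }. *)
Definition tau (n : nat) (la : seq nat) (T : {ffun 'I_n -> 'I_(size la)}) : {set 'I_n} :=
  [set i : 'I_n | (T i < T (ordS i))%N].

Definition swap_entries (n : nat) (la : seq nat) (T : {ffun 'I_n -> 'I_(size la)})
  (i : 'I_n) : {ffun 'I_n -> 'I_(size la)} :=
  [ffun x => T (if x == i then ordS i else if x == ordS i then i else x)].

Definition knuth_move (n : nat) (la : seq nat) (T T' : tabloid n la) : bool :=
  [exists i : 'I_n,
     [&& val T' == @swap_entries n la (val T) i,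
         ~~ (@tau n la (val T) \subset @tau n la (val T')) &
         ~~ (@tau n la (val T') \subset @tau n la (val T))]].

(* Connected components of the graph A_lambda: the classes of the
   reflexive-transitive closure of the (symmetric) Knuth-move relation. *)
Definition components_A (n : nat) (la : seq nat) : {set {set tabloid n la}} :=
  [set [set y | connect (@knuth_move n la) x y] | x : tabloid n la].

(* Main.v *)
Require Import Defs.
From mathcomp Require Import all_boot.
From mathcomp Require Import zify.
Set Implicit Arguments. Unset Strict Implicit. Unset Printing Implicit Defensive.

Definition wleft (c x y : nat) := (minn x y <= c) && (c < maxn x y).
Definition wright (c x y : nat) := (minn x y < c) && (c <= maxn x y).

Inductive lmove : seq nat -> seq nat -> Prop :=
| LmL a b c x y : x != y -> wleft c x y ->
    lmove (a ++ [:: c; x; y] ++ b) (a ++ [:: c; y; x] ++ b)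
| LmR a b c x y : x != y -> wright c x y ->
    lmove (a ++ [:: x; y; c] ++ b) (a ++ [:: y; x; c] ++ b).

Inductive lstar : seq nat -> seq nat -> Prop :=
| LsRefl u : lstar u u
| LsStep u v w : lmove u v -> lstar v w -> lstar u w.

Lemma lstar_trans u v w : lstar u v -> lstar v w -> lstar u w.
Proof. by elim=> // u1 v1 w1 H _ IH /IH; apply: LsStep. Qed.

Lemma lstar1 u v : lmove u v -> lstar u v.
Proof. by move=> H; apply: LsStep H (LsRefl _). Qed.

Lemma lmove_ctx p q u v : lmove u v -> lmove (p ++ u ++ q) (p ++ v ++ q).
Proof.
case=> a b c x y Hxy Hw.
- rewrite !catA -!(catA (p ++ a)) -?catA.
  have := LmL (p ++ a) (b ++ q) Hxy Hw. by rewrite -?catA.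
- have := LmR (p ++ a) (b ++ q) Hxy Hw. by rewrite -?catA.
Qed.

Lemma lstar_ctx p q u v : lstar u v -> lstar (p ++ u ++ q) (p ++ v ++ q).
Proof.
elim=> [w|u1 v1 w1 H _ IH]; first exact: LsRefl.
exact: LsStep (lmove_ctx p q H) IH.
Qed.

Lemma wleftC c x y : wleft c x y = wleft c y x.
Proof. by rewrite /wleft minnC maxnC. Qed.
Lemma wrightC c x y : wright c x y = wright c y x.
Proof. by rewrite /wright minnC maxnC. Qed.

Lemma lmove_sym u v : lmove u v -> lmove v u.
Proof.
case=> a b c x y Hxy Hw.
- by apply: LmL; rewrite 1?eq_sym // wleftC.
- by apply: LmR; rewrite 1?eq_sym // wrightC.
Qed.

Lemma lstar_sym u v : lstar u v -> lstar v u.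
Proof.
elim=> [w|u1 v1 w1 H _ IH]; first exact: LsRefl.
exact: lstar_trans IH (lstar1 (lmove_sym H)).
Qed.

Lemma lmove_perm u v : lmove u v -> perm_eq u v.
Proof.
case=> a b c x y _ _; rewrite perm_cat2l perm_cat2r;
  by apply/permP=> P /=; lia.
Qed.

Lemma lstar_perm u v : lstar u v -> perm_eq u v.
Proof.
elim=> [w|u1 v1 w1 H _ IH]; first exact: perm_refl.
exact: perm_trans (lmove_perm H) IH.
Qed.

Lemma lstar_ctxl p u v : lstar u v -> lstar (p ++ u) (p ++ v).
Proof. by move=> /(lstar_ctx p [::]); rewrite !cats0. Qed.

Lemma stepL p q c x y : x != y -> wleft c x y ->
  lstar (p ++ [:: c; x; y] ++ q) (p ++ [:: c; y; x] ++ q).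
Proof. by move=> H1 H2; apply/lstar1/LmL. Qed.

Lemma stepR p q c x y : x != y -> wright c x y ->
  lstar (p ++ [:: x; y; c] ++ q) (p ++ [:: y; x; c] ++ q).
Proof. by move=> H1 H2; apply/lstar1/LmR. Qed.

Lemma phase1 m c s a p q : a <= c < s ->
  lstar (p ++ c :: iota s m ++ a :: q) (p ++ c :: a :: iota s m ++ q).
Proof.
elim: m c s p => [|m IH] c s p /andP [Hac Hcs] /=; first exact: LsRefl.
apply: lstar_trans.
  have := IH s s.+1 (p ++ [:: c]); rewrite -?catA /=; apply.
  by rewrite leqnn andbT; apply: leq_trans Hac (ltnW Hcs).
have := @stepL p (iota s.+1 m ++ q) c s a; rewrite /= -?catA /=; apply.
  by rewrite neq_ltn (leq_ltn_trans Hac Hcs) orbT.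
rewrite /wleft; apply/andP; split; first by apply: leq_trans (geq_minr _ _) Hac.
by apply: leq_trans Hcs (leq_maxl _ _).
Qed.

Lemma phase2 m s b c p q : s + m <= c <= b ->
  lstar (p ++ iota s m ++ b :: c :: q) (p ++ b :: iota s m ++ c :: q).
Proof.
elim: m s p => [|m IH] s p /andP [Hc Hb] /=; first exact: LsRefl.
apply: lstar_trans.
  have := IH s.+1 (p ++ [:: s]); rewrite -?catA /=; apply.
  by rewrite addSnnS Hc Hb.
case: m IH Hc => [|m] IH Hc.
- have := @stepR p q c s b; rewrite /= -?catA /=; apply.
    by rewrite neq_ltn; apply/orP; left; lia.
  by rewrite /wright; apply/andP; split; lia.
- have := @stepR p (iota s.+2 m ++ c :: q) s.+1 s b; rewrite /= -?catA /=; apply.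
    by rewrite neq_ltn; apply/orP; left; lia.
  by rewrite /wright; apply/andP; split; lia.
Qed.

Lemma commute j a q : a < j -> lstar (iota 0 j ++ a :: q) (a :: iota 0 j ++ q).
Proof.
move=> Haj.
have Ej : iota 0 j = iota 0 a ++ a :: iota a.+1 (j - a.+1).
  by rewrite -[j in iota 0 j](subnKC (ltnW Haj)) iotaD add0n -(subnSK Haj).
rewrite Ej -?catA /=.
apply: lstar_trans.
  by apply: (phase1 (j - a.+1) (c:=a) (s:=a.+1) (iota 0 a)); rewrite leqnn ltnSn.
have := @phase2 a 0 a a [::] (iota a.+1 (j - a.+1) ++ q); rewrite /=; apply.
by rewrite add0n leqnn.
Qed.

Lemma eject j b c q : j <= c <= b ->
  lstar (iota 0 j ++ b :: c :: q) (b :: iota 0 j ++ c :: q).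
Proof. by move=> H; have := @phase2 j 0 b c [::] q; rewrite add0n; apply. Qed.

Lemma sorted_geq_drop y z p : z <= y -> sorted geq (z :: p) -> sorted geq (y :: p).
Proof.
case: p => [//|w p] Hzy /= /andP [Hw ->]; rewrite andbT.
by apply: leq_trans Hw Hzy.
Qed.

Lemma shift post pre x y : x < y -> sorted geq (y :: post) ->
  exists B b1 b2, b1 < b2 /\ lstar (pre ++ x :: y :: post) (B ++ [:: b1; b2]).
Proof.
elim: post pre x y => [|z post IH] pre x y Hxy Hs.
  by exists pre, x, y; split => //; exact: LsRefl.
have /andP [Hzy Hs'] : (z <= y) && sorted geq (z :: post) by [].
case: (boolP ((y == z) || (x < z))) => Hc.
- have Hxz : x < z by case/orP: Hc => // /eqP <-.
  have [B [b1 [b2 [Hb H]]]] := IH (pre ++ [:: y]) x z Hxz Hs'.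
  exists B, b1, b2; split => //.
  apply: lstar_trans H; rewrite -catA /=.
  have := @stepR pre post z x y; rewrite /=; apply.
    by rewrite neq_ltn Hxy.
  by rewrite /wright; apply/andP; split; lia.
- have Hzx : z <= x by rewrite leqNgt; apply: contraNN Hc => ->; rewrite orbT.
  have Hyz : z < y by rewrite ltn_neqAle Hzy andbT; apply: contraNN Hc; rewrite eq_sym => ->.
  have [B [b1 [b2 [Hb H]]]] := IH (pre ++ [:: x]) z y Hyz (sorted_geq_drop (leqnn y) (sorted_geq_drop Hzy Hs')).
  exists B, b1, b2; split => //.
  apply: lstar_trans H; rewrite -catA /=.
  have := @stepL pre post x y z; rewrite /=; apply.
    by rewrite neq_ltn Hyz orbT.
  by rewrite /wleft; apply/andP; split; lia.
Qed.

Lemma last_ascent B : sorted geq B \/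
  exists pre x y post, [/\ B = pre ++ x :: y :: post, x < y & sorted geq (y :: post)].
Proof.
elim: B => [|b B [HB|[pre [x [y [post [E Hxy Hs]]]]]]]; first by left.
- case: B HB => [|y post] HB; first by left.
  case: (leqP y b) => Hyb; first by left; rewrite /= Hyb.
  by right; exists [::], b, y, post.
- by right; exists (b :: pre), x, y, post; rewrite E.
Qed.

Definition GoalG j X := exists u v, lstar (iota 0 j ++ X ++ [:: j]) (u ++ iota 0 j.+1 ++ v).

Lemma iotaS0 j : iota 0 j.+1 = iota 0 j ++ [:: j].
Proof. by rewrite -addn1 iotaD. Qed.

Lemma transfer j X X' p q :
  lstar (iota 0 j ++ X ++ [:: j]) (p ++ (iota 0 j ++ X' ++ [:: j]) ++ q) ->
  GoalG j X' -> GoalG j X.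
Proof.
move=> H [u [v H']]; exists (p ++ u), (v ++ q).
apply: lstar_trans H _; have := lstar_ctx p q H'; by rewrite -!catA.
Qed.

Lemma Goal_nil j : GoalG j [::].
Proof. by exists [::], [::]; rewrite cats0 /= -iotaS0; exact: LsRefl. Qed.

Definition Tcond j (T : seq nat) := T = [::] \/ exists s T', T = s :: T' /\ s < j.

Lemma decompX j X : all (fun x => x != j) X ->
  exists B T, [/\ X = B ++ T, all (fun x => j < x) B & Tcond j T].
Proof.
elim: X => [|a X IH] /=; first by exists [::], [::]; split => //; left.
case/andP => Ha /IH [B [T [E HB HT]]].
case: (ltnP a j) => Haj.
  by exists [::], (a :: X); split => //; right; exists a, X.
exists (a :: B), T; split; rewrite ?E //= HB andbT ltn_neqAle Haj andbT.
by rewrite eq_sym.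
Qed.

Lemma grow_B0 j N (Hj : 0 < j)
  (IH : forall X, size X <= N -> all (fun x => x != j) X -> GoalG j X) :
  forall T, Tcond j T -> all (fun x => x != j) T ->
  size T <= N.+1 -> GoalG j T.
Proof.
move=> T [ET|[s [T' [ET Hs]]]] HT Hsz; subst T; first exact: Goal_nil.
apply: (@transfer j (s :: T') T' [:: s] [::]); last first.
  by apply: IH; [by move: Hsz; rewrite /= ltnS | by case/andP: HT].
rewrite cats0; exact: commute.
Qed.

Lemma grow_inner j N (Hj : 0 < j)
  (IH : forall X, size X <= N -> all (fun x => x != j) X -> GoalG j X) :
  forall B T, all (fun x => j < x) B -> Tcond j T -> all (fun x => x != j) T ->
  size (B ++ T) <= N.+1 -> GoalG j (B ++ T).
Proof.
move=> B; move: {2}(size B) (leqnn (size B)) => k.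
elim: k B => [|k IHk] B.
  by rewrite leqn0 => /nilP -> T _; apply: grow_B0.
move=> HBk T HB HT HTj Hsz.
have bigne : forall x, j < x -> x != j by move=> x Hx; rewrite neq_ltn Hx orbT.
case: (last_ascent B) => [Hs|[pre [x [y [post [EB Hxy Hs]]]]]].
-
  case: B HB HBk Hsz Hs => [|b B'] HB HBk Hsz Hs; first by apply: (grow_B0 Hj IH).
  case/andP: HB => Hb HB'.
  case: B' HB' HBk Hsz Hs => [|b2 B''] HB' HBk Hsz Hs.
  + case: HT => [ET|[s [T' [ET Hsj]]]]; subst T.
    * apply: (@transfer j [:: b] [::] [:: b] [::]); last exact: Goal_nil.
      rewrite cats0 /=; apply: eject; by rewrite leqnn ltnW.
    * apply: (@transfer j (b :: s :: T') (b :: T') [:: s] [::]); last first.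
        apply: IH; first by move: Hsz; rewrite /= !ltnS.
        by rewrite /= bigne //=; case/andP: HTj.
      rewrite cats0.
      apply: lstar_trans (commute _ Hsj).
      have Ej : iota 0 j = iota 0 j.-1 ++ [:: j.-1] by rewrite -iotaS0 prednK.
      rewrite Ej -!catA /=.
      have := @stepL (iota 0 j.-1) (T' ++ [:: j]) j.-1 b s; rewrite /=; apply.
        by rewrite neq_ltn; apply/orP; right; lia.
      by rewrite /wleft; apply/andP; split; lia.
  + have Hb2b : b2 <= b by case/andP: Hs.
    case/andP: HB' => Hb2 HB''.
    apply: (@transfer j (b :: b2 :: B'' ++ T) (b2 :: B'' ++ T) [:: b] [::]); last first.
      apply: IH; first by move: Hsz; rewrite /= ltnS.
      rewrite /= bigne // all_cat HTj andbT /=.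
      by apply/allP => z /(allP HB'') /bigne.
    rewrite cats0 /= -catA /=; apply: eject; by rewrite Hb2b ltnW.
-
  have [B2 [b1 [b2 [Hb12 HS]]]] := shift pre Hxy Hs.
  have Hperm := lstar_perm HS.
  have HB2 : all (fun x => j < x) (B2 ++ [:: b1; b2]) by rewrite -(perm_all _ Hperm) -EB.
  rewrite all_cat /= andbT in HB2; case/and3P: HB2 => HB2 Hb1 Hb2.
  have HsB : size B = (size B2).+2.
    by rewrite EB (perm_size Hperm) size_cat /= addn2.
  case: HT => [ET|[s [T' [ET Hsj]]]]; subst T.
  + apply: (@transfer j (B ++ [::]) (B2 ++ [:: b1]) [::] [:: b2]); last first.
      apply: IH; first by move: Hsz; rewrite cats0 HsB size_cat /= addn1 ltnS.
      rewrite all_cat /= andbT; apply/andP; split; last exact: bigne.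
      by apply/allP => z /(allP HB2) /bigne.
    rewrite cats0 /= EB.
    apply: lstar_trans.
      by apply: (lstar_ctx (iota 0 j) [:: j] HS).
    rewrite -!catA /= catA.
    have := @stepL (iota 0 j ++ B2) [::] b1 b2 j; rewrite /= -!catA /=; apply.
      by rewrite bigne.
    by rewrite /wleft; apply/andP; split; lia.
  + apply: (@transfer j (B ++ s :: T') ((B2 ++ [:: b1]) ++ (s :: b2 :: T')) [::] [::]); last first.
      apply: IHk.
      * by rewrite size_cat /=; move: HBk; rewrite HsB; lia.
      * by rewrite all_cat HB2 /= Hb1.
      * by right; exists s, (b2 :: T').
      * by move: HTj => /= /andP [-> ->]; rewrite andbT; exact: bigne.
      * by move: Hsz; rewrite !size_cat /= HsB; lia.
    rewrite cats0 /= EB.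
    apply: lstar_trans.
      by rewrite -catA; apply: (lstar_ctx (iota 0 j) (s :: T' ++ [:: j]) HS).
    rewrite -!catA /= catA.
    have := @stepL (iota 0 j ++ B2) (T' ++ [:: j]) b1 b2 s; rewrite /= -!catA /=; apply.
      by rewrite neq_ltn; apply/orP; right; lia.
    by rewrite /wleft; apply/andP; split; lia.
Qed.

Lemma grow j X : 0 < j -> all (fun x => x != j) X -> GoalG j X.
Proof.
move=> Hj; move: {2}(size X) (leqnn (size X)) => N.
elim: N X => [|N IH] X.
  by rewrite leqn0 => /nilP -> _; exact: Goal_nil.
move=> Hsz HX; have [B [T [EX HB HT]]] := decompX HX.
subst X; apply: (grow_inner Hj IH) => //.
by move: HX; rewrite all_cat => /andP [].
Qed.

Definition cmove (s t : seq nat) := exists k u v, [/\ s = rot k u, t = rot k v & lmove u v].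

Inductive cstar : seq nat -> seq nat -> Prop :=
| CsRefl u : cstar u u
| CsStep u v w : cmove u v -> cstar v w -> cstar u w.

Lemma cstar_trans u v w : cstar u v -> cstar v w -> cstar u w.
Proof. by elim=> // u1 v1 w1 H _ IH /IH; apply: CsStep. Qed.

Lemma lstar_cstar u v : lstar u v -> cstar u v.
Proof.
elim=> [w|u1 v1 w1 H _ IH]; first exact: CsRefl.
by apply: CsStep IH; exists 0, u1, v1; rewrite !rot0.
Qed.

Lemma cstar_sym u v : cstar u v -> cstar v u.
Proof.
elim=> [w|u1 v1 w1 [k [a [b [E1 E2 H]]]] _ IH]; first exact: CsRefl.
apply: cstar_trans IH _; apply: CsStep (CsRefl _).
by exists k, b, a; split => //; exact: lmove_sym.
Qed.

Lemma rot_rot j k m : exists k', forall t : seq nat, size t = m ->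
  rot j (rot k t) = rot k' t.
Proof.
case: (leqP m k) => Hk.
  by exists j => t Ht; rewrite [rot k t]rot_oversize ?Ht.
case: (leqP m j) => Hj.
  by exists k => t Ht; rewrite [rot j _]rot_oversize // size_rot Ht.
exists (if j + k <= m then j + k else j + k - m) => t Ht.
by rewrite rot_add_mod Ht // ltnW.
Qed.

Lemma cmove_rot j s t : cmove s t -> cmove (rot j s) (rot j t).
Proof.
case=> k [u [v [-> -> H]]].
have [k' Hk'] := rot_rot j k (size u).
exists k', u, v; split => //; apply: Hk' => //.
by rewrite (perm_size (lmove_perm H)).
Qed.

Lemma cstar_rot j s t : cstar s t -> cstar (rot j s) (rot j t).
Proof.
elim=> [w|u1 v1 w1 H _ IH]; first exact: CsRefl.
exact: CsStep (cmove_rot j H) IH.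
Qed.

Definition reach s Y := exists k, cstar s (rot k Y).

Lemma reach_refl s : reach s s.
Proof. by exists 0; rewrite rot0; exact: CsRefl. Qed.

Lemma reach_cstar s Y Y' : reach s Y -> cstar Y Y' -> reach s Y'.
Proof. by case=> k H H'; exists k; apply: cstar_trans H (cstar_rot k H'). Qed.

Lemma reach_lstar s Y Y' : reach s Y -> lstar Y Y' -> reach s Y'.
Proof. by move=> H /lstar_cstar; apply: reach_cstar. Qed.

Lemma reach_rot j s Y : reach s Y -> reach s (rot j Y).
Proof.
case=> k H.
have [k' Hk'] := rot_rot k (size Y - j) (size Y).
exists k'; rewrite -Hk' ?size_rot //.
by have := rotK j Y; rewrite /rotr size_rot => ->.
Qed.

Definition F (cs : seq nat) := flatten [seq iota 0 c | c <- cs].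

Lemma F_rcons cs c : F (rcons cs c) = F cs ++ iota 0 c.
Proof. by rewrite /F -cats1 map_cat flatten_cat /= cats0. Qed.

Lemma comm_F cs a q : all (fun c => a < c) cs -> lstar (F cs ++ a :: q) (a :: F cs ++ q).
Proof.
elim: cs => [|c cs IH] /=; first by move=> _; exact: LsRefl.
case/andP=> Hac /IH H.
rewrite /F /= -/(F cs) -catA; apply: lstar_trans (lstar_ctxl (iota 0 c) H) _.
rewrite -catA; exact: commute.
Qed.

Lemma rotR Cp s A B : all (fun a => all (fun c => a < c) Cp) A ->
  reach s (F Cp ++ A ++ B) -> reach s (F Cp ++ B ++ A).
Proof.
elim: A B => [|a A IH] B; first by rewrite cats0.
case/andP=> Ha HA H.
have H1 : reach s (a :: F Cp ++ A ++ B) by apply: reach_lstar H (comm_F _ Ha).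
have := reach_rot 1 H1; rewrite rot1_cons -cats1 -!catA => /(IH _ HA).
by rewrite -!catA.
Qed.

Lemma split_first (j : nat) W : j \in W -> exists X Y, W = X ++ j :: Y /\ j \notin X.
Proof.
elim: W => [//|w W IH]; rewrite in_cons; case: eqP => [->|Hne] /= H.
  by exists [::], W.
have [X [Y [E HX]]] := IH H; exists (w :: X), Y; rewrite E; split => //.
by rewrite in_cons negb_or HX andbT; apply/eqP => E'; apply: Hne.
Qed.

Lemma grow_step Cp s A B j R : 0 < j ->
  (forall a, a \in R -> all (fun c => a < c) Cp) ->
  perm_eq (A ++ iota 0 j ++ B) R -> j \in R ->
  reach s (F Cp ++ A ++ iota 0 j ++ B) ->
  exists A' B', reach s (F Cp ++ A' ++ iota 0 j.+1 ++ B') /\ perm_eq (A' ++ iota 0 j.+1 ++ B') R.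
Proof.
move=> Hj HR Hp HjR H.
have HA : all (fun a => all (fun c => a < c) Cp) A.
  by apply/allP => a Ha; apply: HR; rewrite -(perm_mem Hp) mem_cat Ha.
have H2 := rotR HA H.
have HjW : j \in B ++ A.
  have : j \in A ++ iota 0 j ++ B by rewrite (perm_mem Hp).
  by rewrite !mem_cat mem_iota add0n ltnn andbF /= => /orP [] ->; rewrite ?orbT.
have [X [Y [EW HX]]] := split_first HjW.
have HXa : all (fun x => x != j) X.
  by apply/allP => x Hx; apply: contraNN HX => /eqP <-.
have [u [v Hg]] := grow Hj HXa.
exists u, (v ++ Y); split.
  apply: reach_lstar H2 _; rewrite -catA EW.
  have := lstar_ctx (F Cp) Y Hg; rewrite -!catA /=; apply.
have Hp2 := lstar_perm Hg.
rewrite perm_sym in Hp2.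
apply: perm_trans _ Hp.
have E1 : u ++ iota 0 j.+1 ++ v ++ Y = (u ++ iota 0 j.+1 ++ v) ++ Y by rewrite -!catA.
rewrite E1; apply: (@perm_trans _ ((iota 0 j ++ X ++ [:: j]) ++ Y)); first by rewrite perm_cat2r.
by rewrite -!catA /= -EW catA perm_catC.
Qed.

Lemma col_step c Cp R s : 0 < c -> (forall a, a \in R -> a < c) ->
  all (fun x => c <= x) Cp -> (forall j, j < c -> j \in R) ->
  reach s (F Cp ++ R) ->
  exists R', reach s (F (rcons Cp c) ++ R') /\ perm_eq R (iota 0 c ++ R').
Proof.
move=> Hc HRc HCp Hin H.
have HR : forall a, a \in R -> all (fun x => a < x) Cp.
  move=> a /HRc Ha; apply/allP => x Hx; apply: leq_trans Ha _.
  exact: (allP HCp).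
have J : forall j, 0 < j <= c -> exists A B,
    reach s (F Cp ++ A ++ iota 0 j ++ B) /\ perm_eq (A ++ iota 0 j ++ B) R.
  elim=> [//|j IH] /andP [_ Hjc].
  case: j IH Hjc => [|j] IH Hjc.
    have [X [Y [E _]]] := split_first (Hin 0 Hc).
    by exists X, Y; rewrite -E; split.
  have [A [B [H1 H2]]] := IH (ltnW Hjc).
  apply: (grow_step (j:=j.+1)) H1 => //.
  exact: Hin.
have [A [B [H1 H2]]] := J c (andb_true_intro (conj Hc (leqnn c))).
exists (B ++ A); split.
  rewrite F_rcons -catA (catA (iota 0 c)); apply: rotR H1.
  by apply/allP => a Ha; apply: HR; rewrite -(perm_mem H2) mem_cat Ha.
rewrite perm_sym; apply: perm_trans _ H2.
by rewrite catA perm_catC.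
Qed.

Lemma nth_le_head (l : seq nat) r : sorted geq l -> nth 0 l r <= head 0 l.
Proof.
elim: l r => [|x l IH] r; first by rewrite nth_nil.
case: r => [|r] /= Hs; first exact: leqnn.
apply: leq_trans (IH r (path_sorted Hs)) _.
by case: l Hs {IH} => [|y l] //= /andP [].
Qed.

Lemma sorted_count (la : seq nat) t r : sorted geq la ->
  (r < count (fun x => t < x) la) = (t < nth 0 la r).
Proof.
elim: la r => [|x la IH] r Hs; first by rewrite nth_nil.
have Hs' := path_sorted Hs.
have Hle : forall y, y \in la -> y <= x.
  move=> y Hy; rewrite -(nth_index 0 Hy); apply: leq_trans (nth_le_head _ Hs') _.
  by case: la Hs {IH Hy Hs'} => [|z la] //= /andP [].
rewrite /=; case: (ltnP t x) => Htx.
  by case: r => [|r] //=; rewrite add1n ltnS IH.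
have -> : count (fun x => t < x) la = 0.
  apply/eqP; rewrite -leqn0 leqNgt -has_count; apply/hasPn => y Hy.
  by rewrite -leqNgt; apply: leq_trans (Hle _ Hy) Htx.
rewrite add0n ltn0; apply/esym/negbTE; rewrite -leqNgt.
case: r => [|r] //=.
case: (ltnP r (size la)) => Hr; last by rewrite nth_default.
by apply: leq_trans (Hle _ (mem_nth 0 Hr)) Htx.
Qed.

Definition cols (la : seq nat) := [seq conj_part la t | t <- iota 0 (head 0 la)].

Lemma size_cols la : size (cols la) = head 0 la.
Proof. by rewrite size_map size_iota. Qed.

Lemma nth_cols la t : t < head 0 la -> nth 0 (cols la) t = conj_part la t.
Proof. by move=> Ht; rewrite (nth_map 0) ?size_iota // nth_iota. Qed.

Lemma head_nth (la : seq nat) : nth 0 la 0 = head 0 la.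
Proof. by case: la. Qed.

Lemma all_columns la s : sorted geq la -> (forall r, count_mem r s = nth 0 la r) ->
  reach s (F (cols la)).
Proof.
move=> Hs Hcnt.
set m := head 0 la.
have I : forall t, t <= m -> exists R, reach s (F (take t (cols la)) ++ R) /\
    forall r, count_mem r R = nth 0 la r - t.
  elim=> [|t IH] Ht.
    by exists s; rewrite take0 /=; split; [exact: reach_refl | move=> r; rewrite subn0].
  have [R [H1 H2]] := IH (ltnW Ht).
  set c := conj_part la t.
  have Hc : 0 < c by rewrite /c /conj_part sorted_count // head_nth.
  have HinR : forall j, (j \in R) = (t < nth 0 la j).
    move=> j; apply/idP/idP => Hj.
      have : count_mem j R != 0 by apply/eqP/count_memPn; rewrite Hj.
      by rewrite H2 subn_eq0 -ltnNge.
    by apply/count_memPn; rewrite H2; apply/eqP; rewrite subn_eq0 -ltnNge.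
  have : exists R', reach s (F (rcons (take t (cols la)) c) ++ R') /\ perm_eq R (iota 0 c ++ R').
    apply: col_step => //.
  - by move=> a; rewrite HinR /c /conj_part sorted_count.
  - apply/(all_nthP 0) => i; rewrite size_take size_cols -/m Ht => Hi.
    rewrite nth_take // nth_cols; last by apply: ltn_trans Ht.
    by apply: sub_count => x /=; apply: leq_ltn_trans; apply: ltnW.
  - by move=> j; rewrite HinR /c /conj_part sorted_count.
  case=> R' [H3 H4].
  exists R'; split.
    by rewrite (take_nth 0) ?size_cols // nth_cols.
  move=> r; move/permP: H4 => /(_ (pred1 r)); rewrite count_cat H2.
  rewrite count_uniq_mem ?iota_uniq // mem_iota add0n /= /c /conj_part sorted_count //.
  by case: ltnP => Hr; lia.
have [R [H1 H2]] := I m (leqnn m).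
have ER : R = [::].
  case: R H1 H2 => [//|a R] _ /(_ a); rewrite /= eqxx.
  by have := nth_le_head a Hs; rewrite -/m; lia.
by move: H1; rewrite ER cats0 take_oversize // size_cols.
Qed.

Definition rotm k (s : seq nat) := rot (k %% size s) s.

Lemma rotm_add a b s : rotm a (rotm b s) = rotm (a + b) s.
Proof.
rewrite /rotm size_rot; set n := size s.
case: (posnP n) => Hn.
  by have := Hn; rewrite /n => /size0nil ->.
rewrite rot_add_mod; try by apply: ltnW; rewrite ltn_mod.
have Ha := ltn_pmod a Hn; have Hb := ltn_pmod b Hn.
have E : (a + b) %% n = (a %% n + b %% n) %% n by rewrite modnDm.
case: leqP => H.
  case: (ltnP (a %% n + b %% n) n) => H'.
    by rewrite E (modn_small H').
  have H2 : a %% n + b %% n = n by apply/eqP; rewrite eqn_leq H H'.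
  by rewrite H2 E H2 modnn rot0 rot_size.
have E2 : a %% n + b %% n = (a %% n + b %% n - n) + n by rewrite subnK // ltnW.
have E3 : (a + b) %% n = a %% n + b %% n - n.
  by rewrite E {1}E2 modnDr modn_small //; lia.
by rewrite E3.
Qed.

Lemma blk a L : all (fun x => x < a) L -> lstar (iota 0 a ++ L) (L ++ iota 0 a).
Proof.
elim: L => [|x L IH] /=; first by move=> _; rewrite cats0; exact: LsRefl.
case/andP=> Hx /IH H.
apply: lstar_trans (commute _ Hx) _.
exact: (lstar_ctxl [:: x] H).
Qed.

Lemma swap2 a c : lstar (iota 0 a ++ iota 0 c) (iota 0 c ++ iota 0 a).
Proof.
case: (leqP c a) => H.
  by apply: blk; apply/allP => x; rewrite mem_iota add0n => /andP [_ Hx]; apply: leq_trans Hx H.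
apply: lstar_sym; apply: blk; apply/allP => x; rewrite mem_iota add0n => /andP [_ Hx].
exact: ltn_trans Hx H.
Qed.

Lemma F_cat A B : F (A ++ B) = F A ++ F B.
Proof. by rewrite /F map_cat flatten_cat. Qed.

Lemma F_cons a A : F (a :: A) = iota 0 a ++ F A.
Proof. by []. Qed.

Lemma mvblk A c : lstar (F A ++ iota 0 c) (iota 0 c ++ F A).
Proof.
elim: A => [|a A IH]; first by rewrite /= cats0; exact: LsRefl.
rewrite F_cons -catA; apply: lstar_trans (lstar_ctxl (iota 0 a) IH) _.
rewrite !catA; have := lstar_ctx [::] (F A) (swap2 a c); by rewrite /= -!catA.
Qed.

Lemma rotm_small k s : k <= size s -> rotm k s = rot k s.
Proof.
rewrite /rotm leq_eqVlt => /orP [/eqP ->|H]; last by rewrite modn_small.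
by rewrite modnn rot0 rot_size.
Qed.

Lemma G_col cs c : c \in cs -> cstar (F cs) (rotm c (F cs)).
Proof.
move=> /split_first [A [B [-> _]]].
rewrite F_cat F_cons.
have Hsz : c <= size (F A ++ iota 0 c ++ F B).
  by rewrite !size_cat size_iota; lia.
rewrite rotm_small //.
apply: cstar_sym.
have H1 : lstar (F A ++ iota 0 c ++ F B) (iota 0 c ++ F A ++ F B).
  by have := lstar_ctx [::] (F B) (mvblk A c); rewrite /= -!catA.
have H2 : lstar (F A ++ F B ++ iota 0 c) (F A ++ iota 0 c ++ F B).
  by apply: lstar_ctxl; apply: mvblk.
apply: cstar_trans (cstar_rot c (lstar_cstar H1)) _.
have -> : rot c (iota 0 c ++ F A ++ F B) = (F A ++ F B) ++ iota 0 c.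
  by have := rot_size_cat (iota 0 c) (F A ++ F B); rewrite size_iota.
by rewrite -catA; exact: lstar_cstar.
Qed.

Lemma G_add C a b : cstar C (rotm a C) -> cstar C (rotm b C) -> cstar C (rotm (a + b) C).
Proof.
move=> Ha Hb; apply: cstar_trans Ha _.
rewrite -rotm_add /rotm size_rot; exact: cstar_rot.
Qed.

Lemma G_0 C : cstar C (rotm 0 C).
Proof. by rewrite /rotm mod0n rot0; exact: CsRefl. Qed.

Lemma G_mul C a k : cstar C (rotm a C) -> cstar C (rotm (k * a) C).
Proof.
move=> Ha; elim: k => [|k IH]; first by rewrite mul0n; exact: G_0.
by rewrite mulSn; apply: G_add.
Qed.

Lemma G_mod C a b : a = b %[mod size C] -> cstar C (rotm a C) -> cstar C (rotm b C).
Proof. by rewrite /rotm => ->. Qed.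

Lemma G_gcd C a b : cstar C (rotm a C) -> cstar C (rotm b C) -> cstar C (rotm (gcdn a b) C).
Proof.
move=> Ha Hb.
case: (posnP a) => [->|Hpa]; first by rewrite gcd0n.
case: (egcdnP b Hpa) => km kn E _.
set N := size C.
case: (posnP N) => HN.
  by move: HN; rewrite /N => /size0nil ->; rewrite /rotm /=; exact: CsRefl.
apply: (@G_mod C (km * a + (kn * (N.-1)) * b)); last first.
  by apply: G_add; apply: G_mul.
have -> : km * a + kn * N.-1 * b = gcdn a b + (kn * b) * N.
  rewrite E mulnAC -{2}(prednK HN) mulnS; lia.
by rewrite addnC modnMDl.
Qed.

Lemma G_fold C cs : (forall c, c \in cs -> cstar C (rotm c C)) ->
  cstar C (rotm (foldr gcdn 0 cs) C).
Proof.
elim: cs => [|c cs IH] H /=; first exact: G_0.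
apply: G_gcd; first by apply: H; rewrite in_cons eqxx.
by apply: IH => x Hx; apply: H; rewrite in_cons Hx orbT.
Qed.

Lemma seq_main la s : sorted geq la -> (forall r, count_mem r s = nth 0 la r) ->
  0 < d_lambda la ->
  exists r, r < d_lambda la /\ cstar s (rotm r (F (cols la))).
Proof.
move=> Hs Hc Hd.
set C := F (cols la); set d := d_lambda la.
have [k Hk] := all_columns Hs Hc.
have [k' Hk'] : exists k', cstar s (rotm k' C).
  case: (leqP k (size C)) => H.
    by exists k; rewrite rotm_small.
  by exists 0; rewrite /rotm mod0n rot0; rewrite rot_oversize in Hk => //; apply: ltnW.
have HG : cstar C (rotm d C).
  apply: G_fold => c Hcin; exact: G_col.
exists (k' %% d); split; first by rewrite ltn_mod.
apply: cstar_trans Hk' _; apply: cstar_sym.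
have Hq : cstar C (rotm (k' %/ d * d) C) by apply: G_mul.
have := cstar_rot (k' %% d %% size C) Hq.
rewrite -/(rotm (k' %% d) C).
have -> : rot (k' %% d %% size C) (rotm (k' %/ d * d) C) = rotm (k' %% d) (rotm (k' %/ d * d) C).
  by rewrite /rotm size_rot.
by rewrite rotm_add addnC -divn_eq.
Qed.


Lemma lmove_dec u v : lmove u v -> exists p q x y,
  [/\ u = p ++ [:: x; y] ++ q, v = p ++ [:: y; x] ++ q, x != y &
    (exists p' c, p = rcons p' c /\ wleft c x y) \/ (exists c q', q = c :: q' /\ wright c x y)].
Proof.
case=> a b c x y Hxy Hw.
- exists (rcons a c), b, x, y; split => //; rewrite ?cat_rcons //.
  by left; exists a, c.
- exists a, (c :: b), x, y; split => //.
  by right; exists c, b.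
Qed.

Lemma nth_swap2 (p q : seq nat) x y j :
  nth 0 (p ++ [:: y; x] ++ q) j =
  nth 0 (p ++ [:: x; y] ++ q) (if j == size p then (size p).+1 else if j == (size p).+1 then size p else j).
Proof.
case: eqP => [->|H1].
  by rewrite !nth_cat ltnn subnn ifN ?subSnn // -leqNgt.
case: eqP => [->|H2].
  by rewrite !nth_cat ltnn subnn ifN ?subSnn // -leqNgt.
rewrite !nth_cat; case: ltnP => // H.
case E: (j - size p) => [|[|k]] //; lia.
Qed.

Section Tab.
Variables (n : nat) (la : seq nat).
Local Notation l := (size la).
Local Notation tf := {ffun 'I_n -> 'I_l}.

Definition sT (T : tf) : seq nat := [seq (val (T i) : nat) | i <- enum 'I_n].

Lemma size_sT (T : tf) : size (sT T) = n.
Proof. by rewrite size_map size_enum_ord. Qed.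

Lemma nth_sT (T : tf) (i : 'I_n) : nth 0 (sT T) i = T i.
Proof. by rewrite (nth_map i) ?size_enum_ord // nth_ord_enum. Qed.

Lemma sT_inj : injective sT.
Proof.
move=> T T' E; apply/ffunP => i; apply: ord_inj.
by rewrite -!nth_sT E.
Qed.

Lemma tauE (T : tf) (j : 'I_n) : (j \in tau T) = (nth 0 (sT T) j < nth 0 (sT T) (j.+1 %% n)).
Proof. by rewrite inE -!nth_sT. Qed.

Definition pi (i x : 'I_n) := if x == i then ordS i else if x == ordS i then i else x.

Lemma piK i : involutive (pi i).
Proof.
move=> x; rewrite /pi.
case: (x =P i) => [->|Hxi].
  by case: (ordS i =P i) => [->|_]; rewrite ?eqxx.
case: (x =P ordS i) => [->|Hxs]; first by rewrite eqxx.
by case: (x =P i); case: (x =P ordS i).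
Qed.

Lemma swapE (T : tf) i x : swap_entries T i x = T (pi i x).
Proof. by rewrite ffunE. Qed.

Lemma card_pre (f : 'I_n -> 'I_n) (T : tf) r : injective f ->
  #|[set x | T (f x) == r]| = #|[set x | T x == r]|.
Proof.
move=> Hf; rewrite -(card_preimset [set x | T x == r] Hf); apply: eq_card => x.
by rewrite !inE.
Qed.

Lemma swap_tab (T : tf) (i : 'I_n) : is_tabloid T -> is_tabloid (swap_entries T i).
Proof.
move=> /forallP H; apply/forallP => r.
have -> : [set x | swap_entries T i x == r] = [set x | T (pi i x) == r].
  by apply/setP => x; rewrite !inE swapE.
by rewrite card_pre ?(H r) //; apply: inv_inj; apply: piK.
Qed.

Definition rT (T : tf) : tf := [ffun i => T (ordS i)].

Lemma rT_tab (T : tf) : is_tabloid T -> is_tabloid (rT T).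
Proof.
move=> /forallP H; apply/forallP => r.
have -> : [set x | rT T x == r] = [set x | T (ordS x) == r].
  by apply/setP => x; rewrite !inE ffunE.
by rewrite card_pre ?(H r) //; apply: ordS_inj.
Qed.

Lemma nth_rot1 (s : seq nat) i : i < size s -> nth 0 (rot 1 s) i = nth 0 s (i.+1 %% size s).
Proof.
case: s => [//|x s] /= Hi; rewrite rot1_cons nth_rcons.
case: (ltngtP i (size s)) => H.
- by rewrite modn_small.
- by move: Hi; rewrite ltnS leqNgt H.
- by rewrite H modnn.
Qed.

Lemma sT_rT (T : tf) : sT (rT T) = rot 1 (sT T).
Proof.
apply: (@eq_from_nth _ 0); first by rewrite size_rot !size_sT.
move=> i; rewrite size_sT => Hi.
rewrite nth_rot1 ?size_sT //.
have -> : i = Ordinal Hi by [].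
by rewrite !nth_sT ffunE /= -(nth_sT T (ordS (Ordinal Hi))).
Qed.

Definition kmf (T T' : tf) : bool :=
  [exists i : 'I_n, [&& T' == swap_entries T i,
     ~~ (tau T \subset tau T') & ~~ (tau T' \subset tau T)]].

Lemma pi_ordS (i x : 'I_n) : pi (ordS i) (ordS x) = ordS (pi i x).
Proof.
rewrite /pi (inj_eq (@ordS_inj n)).
case: (x =P i) => [_|Hxi] //.
by rewrite (inj_eq (@ordS_inj n)); case: eqP.
Qed.

Lemma tau_rT (T : tf) j : (j \in tau (rT T)) = (ordS j \in tau T).
Proof. by rewrite !inE !ffunE. Qed.

Lemma notsub (A B : {set 'I_n}) z : z \in A -> z \notin B -> ~~ (A \subset B).
Proof. by move=> HA HB; apply/subsetPn; exists z. Qed.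

Lemma kmf_rT (T T' : tf) : kmf T T' -> kmf (rT T) (rT T').
Proof.
case/existsP => i /and3P [/eqP E H1 H2].
apply/existsP; exists (ord_pred i); apply/and3P; split.
- apply/eqP/ffunP => x; rewrite E !ffunE.
  have := pi_ordS (ord_pred i) x; rewrite /pi ord_predK => ->; done.
- case/subsetPn: H1 => z Hz Hz'.
  by apply: (@notsub _ _ (ord_pred z)); rewrite tau_rT ord_predK.
- case/subsetPn: H2 => z Hz Hz'.
  by apply: (@notsub _ _ (ord_pred z)); rewrite tau_rT ord_predK.
Qed.

Lemma val_pi (i j : 'I_n) : val (pi i j) =
  (if val j == val i then (val i).+1 %% n else if val j == (val i).+1 %% n then val i else val j).
Proof.
rewrite /pi; have -> : (val i).+1 %% n = val (ordS i) by [].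
by rewrite !val_eqE; case: (j == i); case: (j == ordS i).
Qed.

Lemma nthA0 (p q : seq nat) a b : nth 0 (p ++ [:: a; b] ++ q) (size p) = a.
Proof. by rewrite nth_cat ltnn subnn. Qed.
Lemma nthA1 (p q : seq nat) a b : nth 0 (p ++ [:: a; b] ++ q) (size p).+1 = b.
Proof. by rewrite nth_cat ifN ?subSnn // -leqNgt. Qed.
Lemma nthA2 (p q : seq nat) a b : nth 0 (p ++ [:: a; b] ++ q) (size p).+2 = nth 0 q 0.
Proof. by rewrite nth_cat ifN ?subSnn; [rewrite -addn2 addKn | rewrite -leqNgt; lia]. Qed.
Lemma nthAr (p' q : seq nat) c a b : nth 0 (rcons p' c ++ [:: a; b] ++ q) (size p') = c.
Proof. by rewrite nth_cat size_rcons ltnSn nth_rcons ltnn eqxx. Qed.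

Lemma lin0 (T : tf) v : lmove (sT T) v ->
  exists T' : tf, [/\ kmf T T', sT T' = v & (is_tabloid T -> is_tabloid T')].
Proof.
move=> /lmove_dec [p [q [x [y [Eu Ev Hxy Hw]]]]].
have Hn : n = size p + 2 + size q by rewrite -(size_sT T) Eu !size_cat /=; lia.
have Hm : size p < n by lia.
have Hm1 : (size p).+1 < n by lia.
set i0 : 'I_n := Ordinal Hm.
exists (swap_entries T i0); split; last exact: swap_tab.
- have HsT : sT (swap_entries T i0) = v.
    apply: (@eq_from_nth _ 0); first by rewrite size_sT Ev !size_cat /=; lia.
    move=> j; rewrite size_sT => Hj.
    have -> : j = Ordinal Hj by [].
    rewrite nth_sT swapE -nth_sT val_pi /= (modn_small Hm1) Eu Ev [nth 0 (p ++ [:: y; x] ++ q) j]nth_swap2.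
    done.
  have tT (j : 'I_n) : (j \in tau T) = (nth 0 (sT T) j < nth 0 (sT T) (j.+1 %% n)) by exact: tauE.
  have tT' (j : 'I_n) : (j \in tau (swap_entries T i0)) = (nth 0 v j < nth 0 v (j.+1 %% n)).
    by rewrite tauE HsT.
  have Hi0T : (i0 \in tau T) = (x < y) by rewrite tT /= (modn_small Hm1) Eu nthA0 nthA1.
  have Hi0T' : (i0 \in tau (swap_entries T i0)) = (y < x) by rewrite tT' /= (modn_small Hm1) Ev nthA0 nthA1.
  apply/existsP; exists i0; rewrite eqxx /=.
  case: Hw => [[p' [c [Ep Hw]]]|[c [q' [Eq Hw]]]].
  + have Hw0 : size p' < n by have := Hm; rewrite Ep size_rcons; apply: ltnW.
    set iw : 'I_n := Ordinal Hw0.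
    have Hs : (size p').+1 = size p by rewrite Ep size_rcons.
    have HwT : (iw \in tau T) = (c < x).
      by rewrite tT /= modn_small ?Hs // Eu nthA0 Ep nthAr.
    have HwT' : (iw \in tau (swap_entries T i0)) = (c < y).
      by rewrite tT' /= modn_small ?Hs // Ev nthA0 Ep nthAr.
    move: Hw; rewrite /wleft => /andP [H1 H2].
    case: (ltngtP x y) => Hc; last by rewrite Hc eqxx in Hxy.
    * apply/andP; split; [apply: (notsub (z:=i0)) | apply: (notsub (z:=iw))];
        rewrite ?Hi0T ?Hi0T' ?HwT ?HwT'; lia.
    * apply/andP; split; [apply: (notsub (z:=iw)) | apply: (notsub (z:=i0))];
        rewrite ?Hi0T ?Hi0T' ?HwT ?HwT'; lia.
  + have Hw0 : (size p).+2 < n by move: Hn; rewrite Eq /=; lia.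
    set iw : 'I_n := Ordinal Hm1.
    have HwT : (iw \in tau T) = (y < c).
      by rewrite tT /= modn_small // Eu nthA1 nthA2 Eq.
    have HwT' : (iw \in tau (swap_entries T i0)) = (x < c).
      by rewrite tT' /= modn_small // Ev nthA1 nthA2 Eq.
    move: Hw; rewrite /wright => /andP [H1 H2].
    case: (ltngtP x y) => Hc; last by rewrite Hc eqxx in Hxy.
    * apply/andP; split; [apply: (notsub (z:=i0)) | apply: (notsub (z:=iw))];
        rewrite ?Hi0T ?Hi0T' ?HwT ?HwT'; lia.
    * apply/andP; split; [apply: (notsub (z:=iw)) | apply: (notsub (z:=i0))];
        rewrite ?Hi0T ?Hi0T' ?HwT ?HwT'; lia.
- apply: (@eq_from_nth _ 0); first by rewrite size_sT Ev !size_cat /=; lia.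
  move=> j; rewrite size_sT => Hj.
  have -> : j = Ordinal Hj by [].
  rewrite nth_sT swapE -nth_sT val_pi /= (modn_small Hm1) Eu Ev [nth 0 (p ++ [:: y; x] ++ q) j]nth_swap2.
  done.
Qed.

Lemma rot1_rotm (s : seq nat) : rot 1 s = rotm 1 s.
Proof.
rewrite /rotm; case: s => [//|x [|y s]] //=.
Qed.

Lemma sT_iter j (T : tf) : sT (iter j rT T) = rotm j (sT T).
Proof.
elim: j => [|j IH]; first by rewrite /rotm mod0n rot0.
by rewrite iterS sT_rT IH rot1_rotm rotm_add add1n.
Qed.

Lemma iter_tab j (T : tf) : is_tabloid T -> is_tabloid (iter j rT T).
Proof. by elim: j => [//|j IH] /IH; rewrite iterS; apply: rT_tab. Qed.

Lemma iter_kmf j (T T' : tf) : kmf T T' -> kmf (iter j rT T) (iter j rT T').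
Proof. by elim: j => [//|j IH] /IH; rewrite !iterS; apply: kmf_rT. Qed.

Lemma cmove_tab (T : tf) t : cmove (sT T) t ->
  exists T' : tf, [/\ kmf T T', sT T' = t & (is_tabloid T -> is_tabloid T')].
Proof.
case=> k [u [v [Eu Ev H]]].
have Hsz : size u = n by rewrite -(size_sT T) Eu size_rot.
have Hszv : size v = n by rewrite -(perm_size (lmove_perm H)).
have [k' [Hk' Eu' Ev']] : exists k', [/\ k' <= n, sT T = rot k' u & t = rot k' v].
  case: (leqP k n) => Hk; first by exists k.
  by exists 0; split; rewrite // ?rot0 ?Eu ?Ev rot_oversize // ?Hsz ?Hszv ltnW.
set Tu := iter (n - k') rT T.
have HTu : sT Tu = u.
  rewrite sT_iter Eu' -rotm_small ?Hsz // rotm_add subnK // /rotm Hsz.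
  by rewrite modnn rot0.
rewrite -HTu in H.
have [T'u [Hk Hv Htab]] := lin0 H.
exists (iter k' rT T'u); split.
- have E : iter k' rT Tu = T.
    by apply: sT_inj; rewrite sT_iter HTu Eu' rotm_small // Hsz.
  by have := iter_kmf k' Hk; rewrite E.
- by rewrite sT_iter Hv Ev' rotm_small // Hszv.
- by move=> HT; apply: iter_tab; apply: Htab; apply: iter_tab.
Qed.
End Tab.


Lemma kmf_sym n la (T T' : {ffun 'I_n -> 'I_(size la)}) : kmf T T' -> kmf T' T.
Proof.
case/existsP => i /and3P [/eqP E H1 H2].
apply/existsP; exists i; rewrite H1 H2 andbT andbT.
apply/eqP/ffunP => x; rewrite E !swapE.
by rewrite piK.
Qed.

Lemma knuth_kmf n la (X Y : tabloid n la) : knuth_move X Y = kmf (val X) (val Y).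
Proof. by []. Qed.

Lemma knuth_sym n la : symmetric (@knuth_move n la).
Proof. by move=> X Y; apply/idP/idP; rewrite !knuth_kmf => /kmf_sym. Qed.

Lemma cstar_tab n la s t : cstar s t -> forall X : tabloid n la, sT (val X) = s ->
  exists Y : tabloid n la, connect (@knuth_move n la) X Y /\ sT (val Y) = t.
Proof.
elim=> [u|u v w H _ IH] X EX; first by exists X; rewrite connect0.
rewrite -EX in H.
have [T' [Hk Hv Htab]] := cmove_tab H.
set Y1 : tabloid n la := exist _ T' (Htab (valP X)).
have [Y [HY1 HY2]] := IH Y1 Hv.
exists Y; split => //.
apply: connect_trans HY1; apply: connect1; by rewrite knuth_kmf.
Qed.

Lemma count_sT n la (T : {ffun 'I_n -> 'I_(size la)}) r : is_tabloid T ->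
  count_mem r (sT T) = nth 0 la r.
Proof.
move=> /forallP H.
rewrite /sT count_map.
case: (ltnP r (size la)) => Hr.
  have := H (Ordinal Hr); move/eqP <-.
  rewrite cardE /enum_mem size_filter count_filter; apply: eq_count => x.
  by rewrite !inE /= andbT.
rewrite nth_default //; apply/eqP; rewrite -leqn0 leqNgt -has_count.
apply/hasPn => x _ /=; apply/negP => /eqP Ex.
by move: (ltn_ord (T x)); rewrite Ex ltnNge Hr.
Qed.

Lemma d_pos n la : 0 < n -> is_partition n la -> 0 < d_lambda la.
Proof.
move=> Hn /and3P [Hs Hpos /eqP Hsum].
case: la Hs Hpos Hsum => [|x la] Hs Hpos Hsum; first by rewrite -Hsum in Hn.
have Hx : 0 < x by case/andP: Hpos.
rewrite /d_lambda /=; case: x Hx {Hs Hsum} Hpos => [//|x] _ Hpos /=.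
rewrite gcdn_gt0; apply/orP; left.
by rewrite /conj_part /= add1n.
Qed.

Theorem proposition8p2 (n : nat) (la : seq nat) :
  0 < n -> is_partition n la -> #|components_A n la| <= d_lambda la.
Proof.
move=> Hn Hp.
have Hd := d_pos Hn Hp.
have Hs : sorted geq la by case/and3P: Hp.
set d := d_lambda la.
set C := F (cols la).
have key : forall X : tabloid n la, exists r : 'I_d, exists Y : tabloid n la,
    connect (@knuth_move n la) X Y /\ sT (val Y) = rotm r C.
  move=> X.
  have Hc : forall r, count_mem r (sT (val X)) = nth 0 la r.
    by move=> r; apply: count_sT; exact: (valP X).
  have [r [Hr HC]] := seq_main Hs Hc Hd.
  have [Y [HY1 HY2]] := cstar_tab HC (erefl _).
  by exists (Ordinal Hr), Y.
set g := fun r : 'I_d => [set y | [exists x, (sT (val x) == rotm r C) && connect (@knuth_move n la) x y]].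
have Hsym : connect_sym (@knuth_move n la) by apply: sym_connect_sym; exact: knuth_sym.
apply: (@leq_trans #|g @: [set: 'I_d]|).
  apply: subset_leq_card; apply/subsetP => Z /imsetP [X _ ->].
  have [r [Y [HXY HY]]] := key X.
  apply/imsetP; exists r => //; apply/setP => y; rewrite !inE.
  apply/idP/existsP.
    move=> HXy; exists Y; rewrite HY eqxx /=.
    by apply: connect_trans HXy; rewrite Hsym.
  case=> x /andP [/eqP Hx Hxy].
  have Exy : x = Y by apply: val_inj; apply: sT_inj; rewrite Hx HY.
  by apply: connect_trans HXY _; rewrite -Exy.
apply: leq_trans (leq_imset_card _ _) _.
by rewrite cardsT card_ord.
Qed.
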